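(* Let $H$ be a real Hilbert space, $A:H\to H$ bounded linear, $f\in H$ such that $Au=f$ is solvable, and $y$ the minimal-norm solution ($Ay=f$, $y\perp\mathcal N(A)$). Let $P:H\to H$ be bounded linear with $T:=PA$ selfadjoint, $T\ge0$, and $\mathcal N(T)=\mathcal N(A)$. Let $h>0$ be a constant with $h\|T\|<2$, and $u_0\in H$ with $u_0-y\perp\mathcal N(A)$. For $\delta>0$ let $f_\delta\in H$ with $\|f_\delta-f\|\le\delta$, and define $$u_{n+1}=u_n-hP(Au_n-f_\delta),\quad n\ge0,$$ starting from $u_0$ (the iterates depend on $\delta$). If positive integers $n_\delta$ satisfy $\lim_{\delta\to0}n_\delta h=\infty$ and $\lim_{\delta\to0}n_\delta h\delta=0$, then $\lim_{\delta\to0}\|u_{n_\delta}-y\|=0$. In particular this holds for $n_\delta=C/(h\delta^{\gamma})$ (rounded to an integer) with constants $C>0$, $\gamma\in(0,1)$.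
   Context: $\mathcal N(A)=\{u\in H:Au=0\}$. *)

(* Defs.v *)
From Stdlib Require Import Reals Lra.
Open Scope R_scope.

Record HilbertSpace := {
  hcar :> Type;
  hzero : hcar;
  hadd : hcar -> hcar -> hcar;
  hopp : hcar -> hcar;
  hscal : R -> hcar -> hcar;
  hinner : hcar -> hcar -> R;
  hadd_assoc : forall x y z, hadd x (hadd y z) = hadd (hadd x y) z;
  hadd_comm : forall x y, hadd x y = hadd y x;
  hadd_0 : forall x, hadd hzero x = x;
  hadd_opp : forall x, hadd x (hopp x) = hzero;
  hscal_assoc : forall a b x, hscal a (hscal b x) = hscal (a * b) x;
  hscal_1 : forall x, hscal 1 x = x;
  hscal_distr_l : forall a x y, hscal a (hadd x y) = hadd (hscal a x) (hscal a y);
  hscal_distr_r : forall a b x, hscal (a + b) x = hadd (hscal a x) (hscal b x);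
  hinner_sym : forall x y, hinner x y = hinner y x;
  hinner_add_l : forall x y z, hinner (hadd x y) z = hinner x z + hinner y z;
  hinner_scal_l : forall a x y, hinner (hscal a x) y = a * hinner x y;
  hinner_nonneg : forall x, 0 <= hinner x x;
  hinner_def : forall x, hinner x x = 0 -> x = hzero;
  hcomplete : forall s : nat -> hcar,
    (forall eps, 0 < eps -> exists N, forall m n, (N <= m)%nat -> (N <= n)%nat ->
        sqrt (hinner (hadd (s m) (hopp (s n))) (hadd (s m) (hopp (s n)))) < eps) ->
    exists l, forall eps, 0 < eps -> exists N, forall n, (N <= n)%nat ->
        sqrt (hinner (hadd (s n) (hopp l)) (hadd (s n) (hopp l))) < eps
}.

Arguments hzero {_}.
Arguments hadd {_}.
Arguments hopp {_}.
Arguments hscal {_}.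
Arguments hinner {_}.

Definition hsub {H : HilbertSpace} (x y : H) : H := hadd x (hopp y).
Definition hnorm {H : HilbertSpace} (x : H) : R := sqrt (hinner x x).

Definition bounded_linear {H : HilbertSpace} (A : H -> H) : Prop :=
  (forall x y, A (hadd x y) = hadd (A x) (A y)) /\
  (forall a x, A (hscal a x) = hscal a (A x)) /\
  (exists C, forall x, hnorm (A x) <= C * hnorm x).

Definition is_opnorm {H : HilbertSpace} (T : H -> H) (M : R) : Prop :=
  is_lub (fun r => exists x : H, hnorm x <= 1 /\ r = hnorm (T x)) M.

Definition in_kernel {H : HilbertSpace} (A : H -> H) (u : H) : Prop := A u = hzero.

Definition orth_kernel {H : HilbertSpace} (A : H -> H) (v : H) : Prop :=
  forall z, in_kernel A z -> hinner v z = 0.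

Definition selfadjoint {H : HilbertSpace} (T : H -> H) : Prop :=
  forall x y, hinner (T x) y = hinner x (T y).

Definition nonneg_op {H : HilbertSpace} (T : H -> H) : Prop :=
  forall x, 0 <= hinner (T x) x.

Fixpoint iterate {H : HilbertSpace} (P A : H -> H) (h : R) (fd u0 : H) (n : nat) : H :=
  match n with
  | O => u0
  | S k => let u := iterate P A h fd u0 k in hsub u (hscal h (P (hsub (A u) fd)))
  end.

(* Main.v *)
Require Import Defs.
From Stdlib Require Import Reals Lra Psatz.
Open Scope R_scope.

Lemma hadd_cancel {H : HilbertSpace} (a b c : H) : hadd a b = hadd a c -> b = c.
Proof.
  intro E. assert (E2 : hadd (hopp a) (hadd a b) = hadd (hopp a) (hadd a c)) by (rewrite E; auto).
  rewrite !hadd_assoc in E2. rewrite (hadd_comm _ (hopp a)) in E2.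
  rewrite hadd_opp, !hadd_0 in E2. exact E2.
Qed.

Lemma hadd_0r {H : HilbertSpace} (x : H) : hadd x hzero = x.
Proof. rewrite hadd_comm; apply hadd_0. Qed.

Lemma hscal_0 {H : HilbertSpace} (x : H) : hscal 0 x = hzero.
Proof.
  apply (hadd_cancel (hscal 0 x)). rewrite <- hscal_distr_r, hadd_0r. f_equal; ring.
Qed.

Lemma hopp_scal {H : HilbertSpace} (x : H) : hopp x = hscal (-1) x.
Proof.
  apply (hadd_cancel x). rewrite hadd_opp. rewrite <- (hscal_1 _ x) at 1.
  rewrite <- hscal_distr_r. replace (1 + -1) with 0 by ring. now rewrite hscal_0.
Qed.

Lemma hscal_zero {H : HilbertSpace} (a : R) : hscal a (@hzero H) = hzero.
Proof. rewrite <- (hscal_0 hzero), hscal_assoc. f_equal; ring. Qed.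

Lemma hinner_add_r {H : HilbertSpace} (x y z : H) : hinner x (hadd y z) = hinner x y + hinner x z.
Proof. rewrite hinner_sym, hinner_add_l, (hinner_sym _ y), (hinner_sym _ z). ring. Qed.

Lemma hinner_scal_r {H : HilbertSpace} a (x y : H) : hinner x (hscal a y) = a * hinner x y.
Proof. rewrite hinner_sym, hinner_scal_l, hinner_sym. ring. Qed.

Lemma hinner_0l {H : HilbertSpace} (y : H) : hinner hzero y = 0.
Proof. rewrite <- (hscal_0 hzero), hinner_scal_l. ring. Qed.

Lemma hinner_0r {H : HilbertSpace} (y : H) : hinner y hzero = 0.
Proof. rewrite hinner_sym; apply hinner_0l. Qed.

Lemma hinner_sub_l {H : HilbertSpace} (x y z : H) : hinner (hsub x y) z = hinner x z - hinner y z.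
Proof. unfold hsub. rewrite hinner_add_l, hopp_scal, hinner_scal_l. ring. Qed.

Lemma hinner_sub_r {H : HilbertSpace} (x y z : H) : hinner z (hsub x y) = hinner z x - hinner z y.
Proof. rewrite hinner_sym, hinner_sub_l, !(hinner_sym _ z). ring. Qed.

Definition linop {H : HilbertSpace} (L : H -> H) : Prop :=
  (forall x y, L (hadd x y) = hadd (L x) (L y)) /\ (forall a x, L (hscal a x) = hscal a (L x)).

Lemma lin_zero {H : HilbertSpace} (L : H -> H) : linop L -> L hzero = hzero.
Proof. intros [_ Hs]. rewrite <- (hscal_0 hzero), Hs. now rewrite !hscal_0. Qed.

Lemma lin_sub {H : HilbertSpace} (L : H -> H) x y : linop L -> L (hsub x y) = hsub (L x) (L y).
Proof. intros [Ha Hs]. unfold hsub. rewrite Ha, !hopp_scal, Hs. reflexivity. Qed.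

Lemma discr a b c : 0 <= c -> (forall t, 0 <= a + 2*b*t + c*t*t) -> b*b <= a*c.
Proof.
  intros Hc0 Ht. assert (Ha : 0 <= a) by (specialize (Ht 0); lra).
  destruct (Req_dec c 0) as [Hc|Hc].
  - subst c. destruct (Req_dec b 0) as [Hb|Hb].
    + subst. nra.
    + exfalso. specialize (Ht (-(a+1)/(2*b))).
      replace (a + 2 * b * (- (a + 1) / (2 * b)) + 0 * (- (a + 1) / (2 * b)) * (- (a + 1) / (2 * b))) with (-1) in Ht by (field; auto). lra.
  - specialize (Ht (-b/c)).
    replace (a + 2 * b * (- b / c) + c * (- b / c) * (- b / c)) with (a - b*b/c) in Ht by (field; lra).
    assert (Hq : b*b/c <= a) by lra. apply Rmult_le_reg_r with (/c). apply Rinv_0_lt_compat; lra.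
    replace (a*c*/c) with a by (field; lra). unfold Rdiv in Hq. lra.
Qed.

Lemma hinner_opp_l {H : HilbertSpace} (x z : H) : hinner (hopp x) z = - hinner x z.
Proof. rewrite hopp_scal, hinner_scal_l. ring. Qed.

Create HintDb hin.
Hint Rewrite @hinner_add_l @hinner_sub_l @hinner_scal_l @hinner_opp_l @hinner_0l : hin.

Lemma ext_inner {H : HilbertSpace} (x y : H) : (forall z, hinner x z = hinner y z) -> x = y.
Proof.
  intro E. assert (Hd : hsub x y = hzero).
  { apply hinner_def. rewrite hinner_sub_l, !E. ring. }
  unfold hsub in Hd. apply (hadd_cancel (hopp y)). rewrite (hadd_comm _ (hopp y) y), hadd_opp, <- Hd, hadd_comm. reflexivity.
Qed.

Ltac veq := apply ext_inner; intro; autorewrite with hin; ring.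

Lemma cs_gen {H : HilbertSpace} (L : H -> H) : linop L ->
  (forall x y, hinner (L x) y = hinner x (L y)) -> (forall x, 0 <= hinner (L x) x) ->
  forall x y, hinner (L x) y * hinner (L x) y <= hinner (L x) x * hinner (L y) y.
Proof.
  intros Hl Hsa Hp x y. apply discr. apply Hp.
  intro t. pose proof (Hp (hadd x (hscal t y))) as Q.
  destruct Hl as [Ha Hs]. rewrite Ha, Hs in Q.
  rewrite !hinner_add_l, !hinner_add_r, !hinner_scal_l, !hinner_scal_r in Q.
  rewrite (Hsa y x), (hinner_sym _ y (L x)) in Q. nra.
Qed.

Lemma linop_id {H : HilbertSpace} : linop (fun x : H => x).
Proof. split; auto. Qed.

Lemma cs_sq {H : HilbertSpace} (x y : H) : hinner x y * hinner x y <= hinner x x * hinner y y.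
Proof. apply (cs_gen (fun x => x) linop_id); auto. intro; apply hinner_nonneg. Qed.

Lemma hnorm_nonneg {H : HilbertSpace} (x : H) : 0 <= hnorm x.
Proof. apply sqrt_pos. Qed.

Lemma hnorm_sq {H : HilbertSpace} (x : H) : hnorm x * hnorm x = hinner x x.
Proof. apply sqrt_sqrt, hinner_nonneg. Qed.

Lemma sq_le_abs a b : 0 <= b -> a * a <= b * b -> Rabs a <= b.
Proof. intros Hb Hab. apply Rsqr_le_abs_0 in Hab. rewrite (Rabs_right b) in Hab by lra. exact Hab. Qed.

Lemma cs {H : HilbertSpace} (x y : H) : Rabs (hinner x y) <= hnorm x * hnorm y.
Proof.
  apply sq_le_abs. apply Rmult_le_pos; apply hnorm_nonneg.
  replace (hnorm x * hnorm y * (hnorm x * hnorm y)) with ((hnorm x * hnorm x) * (hnorm y * hnorm y)) by ring.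
  rewrite !hnorm_sq. apply cs_sq.
Qed.

Lemma sq_le a b : 0 <= a -> 0 <= b -> a * a <= b * b -> a <= b.
Proof. intros. nra. Qed.

Lemma hnorm_tri {H : HilbertSpace} (x y : H) : hnorm (hadd x y) <= hnorm x + hnorm y.
Proof.
  apply sq_le. apply hnorm_nonneg. pose proof (hnorm_nonneg x); pose proof (hnorm_nonneg y); lra.
  rewrite hnorm_sq. replace ((hnorm x + hnorm y) * (hnorm x + hnorm y)) with
   (hnorm x * hnorm x + hnorm y * hnorm y + 2 * (hnorm x * hnorm y)) by ring.
  rewrite !hnorm_sq, !hinner_add_l, !hinner_add_r. rewrite (hinner_sym _ y x).
  pose proof (cs x y). pose proof (Rle_abs (hinner x y)). lra.
Qed.

Lemma hnorm_zero {H : HilbertSpace} : hnorm (@hzero H) = 0.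
Proof. unfold hnorm. rewrite hinner_0l. apply sqrt_0. Qed.

Lemma hnorm_scal {H : HilbertSpace} a (x : H) : hnorm (hscal a x) = Rabs a * hnorm x.
Proof.
  unfold hnorm. rewrite hinner_scal_l, hinner_scal_r, <- Rmult_assoc.
  rewrite sqrt_mult_alt by nra. f_equal. rewrite <- sqrt_Rsqr_abs. reflexivity.
Qed.

Lemma hnorm_sub_tri {H : HilbertSpace} (x y z : H) : hnorm (hsub x y) <= hnorm (hsub x z) + hnorm (hsub z y).
Proof.
  replace (hsub x y) with (hadd (hsub x z) (hsub z y)) by veq. apply hnorm_tri.
Qed.

Lemma hnorm_eq0 {H : HilbertSpace} (x : H) : hnorm x = 0 -> x = hzero.
Proof. intro E. apply hinner_def. rewrite <- hnorm_sq, E. ring. Qed.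

Lemma hnorm_sub_sym {H : HilbertSpace} (x y : H) : hnorm (hsub x y) = hnorm (hsub y x).
Proof.
  replace (hsub x y) with (hscal (-1) (hsub y x)) by veq. rewrite hnorm_scal. replace (Rabs (-1)) with 1. ring. rewrite Rabs_left by lra. ring.
Qed.

Lemma N2_sub {H : HilbertSpace} (x y : H) : hinner (hsub x y) (hsub x y) = hinner x x - 2 * hinner x y + hinner y y.
Proof. rewrite !hinner_sub_l, !hinner_sub_r, (hinner_sym _ y x). ring. Qed.

Definition good {H : HilbertSpace} (T : H -> H) (M h : R) : Prop :=
  linop T /\ (forall x y, hinner (T x) y = hinner x (T y)) /\ (forall x, 0 <= hinner (T x) x) /\
  0 <= M /\ (forall x, hnorm (T x) <= M * hnorm x) /\ 0 < h /\ h * M < 2.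

Definition Sop {H : HilbertSpace} (T : H -> H) (h : R) (x : H) : H := hsub x (hscal h (T x)).

Lemma key1 {H : HilbertSpace} T M h : good T M h -> forall x : H, hinner (T x) (T x) <= M * hinner (T x) x.
Proof.
  intros (Hl & Hsa & Hp & HM & Hb & Hh & HhM) x.
  pose proof (cs_gen T Hl Hsa Hp x (T x)) as C.
  assert (C2 : hinner (T (T x)) (T x) <= M * hinner (T x) (T x)).
  { pose proof (cs (T (T x)) (T x)). pose proof (Rle_abs (hinner (T (T x)) (T x))).
    pose proof (Hb (T x)). rewrite <- hnorm_sq.
    pose proof (hnorm_nonneg (T x)). pose proof (hnorm_nonneg (T (T x))). nra. }
  pose proof (hinner_nonneg _ (T x)). pose proof (Hp x).
  destruct (Req_dec (hinner (T x) (T x)) 0) as [E|E]. rewrite E. nra.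
  assert (hinner (T x) (T x) * hinner (T x) (T x) <= (M * hinner (T x) x) * hinner (T x) (T x)) by nra.
  apply Rmult_le_reg_r with (hinner (T x) (T x)); lra.
Qed.

Lemma key2 {H : HilbertSpace} T M h : good T M h -> forall x : H,
  h * (2 - h * M) * hinner (T x) x <= hinner x x - hinner (Sop T h x) (Sop T h x).
Proof.
  intros G x. pose proof (key1 T M h G x) as K. destruct G as (Hl & Hsa & Hp & HM & Hb & Hh & HhM).
  unfold Sop. rewrite N2_sub, !hinner_scal_l, !hinner_scal_r, (hinner_sym _ x (T x)). nra.
Qed.

Lemma S_contr {H : HilbertSpace} T M h : good T M h -> forall x : H,
  hinner (Sop T h x) (Sop T h x) <= hinner x x.
Proof.
  intros G x. pose proof (key2 T M h G x). destruct G as (Hl & Hsa & Hp & HM & Hb & Hh & HhM).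
  pose proof (Hp x). assert (0 <= h*(2-h*M)*hinner (T x) (x)) by (apply Rmult_le_pos; [apply Rmult_le_pos|]; lra). lra.
Qed.

Lemma S_contr_n {H : HilbertSpace} T M h : good T M h -> forall x : H,
  hnorm (Sop T h x) <= hnorm x.
Proof.
  intros G x. unfold hnorm. apply sqrt_le_1_alt. eapply S_contr; eauto.
Qed.

Lemma S_lin {H : HilbertSpace} (T : H -> H) h : linop T -> linop (Sop T h).
Proof.
  intros [Ha Hs]. split; intros; unfold Sop; rewrite ?Ha, ?Hs; veq.
Qed.

Lemma S_sa {H : HilbertSpace} T M h : good T M h -> forall x y : H,
  hinner (Sop T h x) y = hinner x (Sop T h y).
Proof.
  intros (Hl & Hsa & _) x y. unfold Sop. rewrite hinner_sub_l, hinner_sub_r, hinner_scal_l, hinner_scal_r, Hsa. ring.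
Qed.

Lemma shift {H : HilbertSpace} T M h : good T M h -> forall (x : H) k p q,
  hinner (Nat.iter (p + k) (Sop T h) x) (Nat.iter q (Sop T h) x) =
  hinner (Nat.iter p (Sop T h) x) (Nat.iter (q + k) (Sop T h) x).
Proof.
  intros G x k. induction k as [|k IH]; intros p q.
  - rewrite !Nat.add_0_r. reflexivity.
  - rewrite Nat.add_succ_r. simpl. rewrite (S_sa T M h G).
    replace (q + S k)%nat with (S q + k)%nat by lia.
    rewrite <- IH. reflexivity.
Qed.

Lemma S_orth {H : HilbertSpace} T M h : good T M h -> forall x : H,
  (forall z, T z = hzero -> hinner x z = 0) -> forall n z, T z = hzero -> hinner (Nat.iter n (Sop T h) x) z = 0.
Proof.
  intros G x Hx n. induction n as [|n IH]; intros z Hz; simpl. auto.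
  rewrite (S_sa T M h G). unfold Sop. rewrite Hz, hscal_zero, hinner_sub_r, hinner_0r, IH; auto. ring.
Qed.

Lemma sqrt_lt_e a e : 0 <= a -> 0 < e -> a < e * e -> sqrt a < e.
Proof.
  intros. rewrite <- (sqrt_square e) by lra. apply sqrt_lt_1_alt. lra.
Qed.

Lemma zero_of_small a : 0 <= a -> (forall e, 0 < e -> a < e) -> a = 0.
Proof.
  intros Ha He. destruct (Req_dec a 0); auto. specialize (He a). lra.
Qed.

Lemma iter_mono {H : HilbertSpace} T M h : good T M h -> forall (x : H) m j,
  hnorm (Nat.iter (m + j) (Sop T h) x) <= hnorm (Nat.iter m (Sop T h) x).
Proof.
  intros G x m j. induction j as [|j IH].
  - rewrite Nat.add_0_r. lra.
  - rewrite Nat.add_succ_r. simpl. eapply Rle_trans; [eapply S_contr_n; eauto | exact IH].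
Qed.

Lemma inner_pair {H : HilbertSpace} T M h : good T M h -> forall (x : H) a b,
  hinner (Nat.iter (a + a) (Sop T h) x) (Nat.iter (b + b) (Sop T h) x) =
  hinner (Nat.iter (a + b) (Sop T h) x) (Nat.iter (a + b) (Sop T h) x).
Proof.
  intros G x a b. destruct (Nat.le_ge_cases a b) as [Hab|Hab].
  - destruct (Nat.le_exists_sub a b Hab) as [j [Hj _]]. subst b.
    pose proof (shift T M h G x j (a + a) (a + (j + a))) as E.
    replace (a + a + j)%nat with (a + (j + a))%nat in E by lia.
    replace ((j + a) + (j + a))%nat with (a + (j + a) + j)%nat by lia. rewrite <- E. reflexivity.
  - destruct (Nat.le_exists_sub b a Hab) as [j [Hj _]]. subst a.
    pose proof (shift T M h G x j (b + b) (b + (j + b))) as E.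
    replace (b + b + j)%nat with (b + (j + b))%nat in E by lia.
    replace ((j + b) + (j + b))%nat with (b + (j + b) + j)%nat in * by lia.
    rewrite hinner_sym, <- E. replace (j + b + b)%nat with (b + (j + b))%nat by lia. reflexivity.
Qed.

Lemma noisefree {H : HilbertSpace} T M h : good T M h -> forall x : H,
  (forall z, T z = hzero -> hinner x z = 0) ->
  forall eps, 0 < eps -> exists N, forall n, (N <= n)%nat -> hnorm (Nat.iter n (Sop T h) x) < eps.
Proof.
  intros G x Hx.
  set (It := fun n => Nat.iter n (Sop T h) x).
  set (d := fun n => hinner (It n) (It n)).
  assert (Hdec : Un_decreasing d).
  { intro n. unfold d, It. simpl. eapply S_contr; eauto. }
  assert (Hlb : has_lb d).
  { exists 0. intros r [i Hi]. unfold opp_seq in Hi. subst r. pose proof (hinner_nonneg _ (It i)). unfold d. lra. }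
  destruct (decreasing_cv d Hdec Hlb) as [L HL].
  pose proof (decreasing_ineq d L Hdec HL) as HLd.
  set (r := fun k => It (k + k)%nat).
  assert (Hcau : forall eps, 0 < eps -> exists N, forall m n, (N <= m)%nat -> (N <= n)%nat ->
        sqrt (hinner (hadd (r m) (hopp (r n))) (hadd (r m) (hopp (r n)))) < eps).
  { intros e He. destruct (HL (e * e / 4)) as [N HN]. nra.
    exists N. intros m n Hm Hn. fold (hsub (r m) (r n)).
    apply sqrt_lt_e; auto. apply hinner_nonneg.
    rewrite N2_sub. unfold r. unfold It; rewrite (inner_pair T M h G x m n).
    pose proof (HN (m + m)%nat ltac:(lia)). pose proof (HN (n + n)%nat ltac:(lia)).
    pose proof (HN (m + n)%nat ltac:(lia)). unfold d, It, Rdist in *.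
    apply Rabs_def2 in H0. apply Rabs_def2 in H1. apply Rabs_def2 in H2. lra. }
  destruct (hcomplete H r Hcau) as [z Hz].
  destruct G as (Hl & Hsa & Hp & HM & Hb & Hh & HhM) eqn:EG.
  set (c := h * (2 - h * M)). assert (Hc : 0 < c) by (unfold c; nra).
  assert (Hrel : forall y, c * hinner (T y) (T y) <= M * (hinner y y - hinner (Sop T h y) (Sop T h y))).
  { intro y. pose proof (key1 T M h G y). pose proof (key2 T M h G y). fold c in H1.
    pose proof (Hp y). nra. }
  assert (HTz : T z = hzero).
  { apply hnorm_eq0. apply zero_of_small. apply hnorm_nonneg. intros e He.
    destruct (Hz (e / (2 * (M + 1)))) as [N1 HN1]. apply Rdiv_lt_0_compat; lra.
    destruct (HL (c * (e * e) / (4 * (M + 1)))) as [N2 HN2].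
    apply Rdiv_lt_0_compat; [apply Rmult_lt_0_compat; nra | lra].
    set (k := max N1 N2).
    specialize (HN1 k ltac:(lia)). specialize (HN2 (k + k)%nat ltac:(lia)).
    unfold Rdist in HN2. apply Rabs_def2 in HN2.
    pose proof (Hrel (r k)) as R1. pose proof (HLd (S (k + k))) as R2.
    unfold d, It in R2, HN2. simpl in R2. unfold r, It in R1.
    assert (HTr : hinner (T (r k)) (T (r k)) < e * e / 4).
    { unfold r, It. apply Rmult_lt_reg_l with c; auto.
      apply Rle_lt_trans with (M * (c * (e * e) / (4 * (M + 1)))).
      - eapply Rle_trans. exact R1. apply Rmult_le_compat_l; auto. lra.
      - unfold Rdiv. rewrite Rinv_mult.
        assert (0 < /(M+1)) by (apply Rinv_0_lt_compat; lra).
        assert (M * / (M+1) < 1). { apply Rmult_lt_reg_r with (M+1). lra. field_simplify; lra. }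
        assert (0 < c * (e*e) * /4) by (apply Rmult_lt_0_compat; [apply Rmult_lt_0_compat; [auto|nra]|lra]). replace (M * (c * (e * e) * (/ 4 * / (M + 1)))) with ((M * /(M+1)) * (c * (e*e) * /4)) by ring. replace (c * (e * e * / 4)) with (1 * (c * (e * e) * / 4)) by ring. apply Rmult_lt_compat_r; lra. }
    assert (HTr2 : hnorm (T (r k)) < e / 2).
    { unfold hnorm. apply sqrt_lt_e. apply hinner_nonneg. lra. lra. }
    replace (T z) with (hadd (T (hsub z (r k))) (T (r k))).
    2:{ rewrite (lin_sub T) by auto. veq. }
    eapply Rle_lt_trans. apply hnorm_tri.
    pose proof (Hb (hsub z (r k))). rewrite hnorm_sub_sym in H0. fold (hsub (r k) z) in HN1.
    assert (M * hnorm (hsub (r k) z) <= e / 2).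
    { apply Rle_trans with (M * (e / (2 * (M + 1)))). apply Rmult_le_compat_l. lra. apply Rlt_le; exact HN1.
      apply Rmult_le_reg_r with (2 * (M + 1)). lra. replace (M * (e / (2 * (M + 1))) * (2 * (M + 1))) with (M*e) by (field; lra). replace (e/2*(2*(M+1))) with (e*M + e) by field. lra. }
    lra. }
  assert (Hz0 : z = hzero).
  { apply hnorm_eq0. apply zero_of_small. apply hnorm_nonneg. intros e He.
    destruct (Hz e He) as [N1 HN1]. specialize (HN1 N1 (le_n _)). fold (hsub (r N1) z) in HN1.
    assert (Hle : hnorm z <= hnorm (hsub (r N1) z)).
    { destruct (Req_dec (hnorm z) 0) as [E|E]. rewrite E. apply hnorm_nonneg.
      assert (Hzz : hinner z z = hinner (hsub z (r N1)) z).
      { rewrite hinner_sub_l. unfold r, It. rewrite (S_orth T M h G x Hx); auto. ring. }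
      pose proof (cs (hsub z (r N1)) z). pose proof (Rle_abs (hinner (hsub z (r N1)) z)).
      rewrite <- Hzz in H0, H1. rewrite <- hnorm_sq in H0, H1. rewrite hnorm_sub_sym in H0.
      pose proof (hnorm_nonneg z).
      apply Rmult_le_reg_r with (hnorm z). lra. lra. }
    apply Rle_lt_trans with (1 := Hle). exact HN1. }
  subst z. intros eps Heps. destruct (Hz eps Heps) as [N HN]. exists (N + N)%nat.
  intros n Hn. specialize (HN N (le_n _)).
  replace (hadd (r N) (hopp hzero)) with (r N) in HN by veq.
  destruct (Nat.le_exists_sub (N + N) n Hn) as [j [Hj _]]. subst n.
  rewrite Nat.add_comm. eapply Rle_lt_trans. apply (iter_mono T M h G). exact HN.
Qed.

Lemma opnorm_bound {H : HilbertSpace} (T : H -> H) M : linop T -> is_opnorm T M ->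
  0 <= M /\ forall x, hnorm (T x) <= M * hnorm x.
Proof.
  intros Hl [Hub _].
  assert (HM : 0 <= M).
  { apply Hub. exists hzero. rewrite (lin_zero T Hl), hnorm_zero. split; lra. }
  split; auto. intro x.
  destruct (Req_dec (hnorm x) 0) as [E|E].
  - rewrite (hnorm_eq0 x E), (lin_zero T Hl), hnorm_zero. pose proof (hnorm_nonneg (@hzero H)). rewrite hnorm_zero in *. lra.
  - pose proof (hnorm_nonneg x). set (r := hnorm x) in *.
    assert (Hr : 0 < r) by lra.
    assert (Hx : hnorm (T (hscal (/ r) x)) <= M).
    { apply Hub. exists (hscal (/r) x). split; auto. rewrite hnorm_scal. fold r.
      rewrite Rabs_right by (left; apply Rinv_0_lt_compat; lra). right; field; lra. }
    destruct Hl as [_ Hs]. rewrite Hs, hnorm_scal, Rabs_right in Hx by (left; apply Rinv_0_lt_compat; lra).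
    apply Rmult_le_reg_l with (/ r). apply Rinv_0_lt_compat; lra.
    replace (/ r * (M * r)) with M by (field; lra). exact Hx.
Qed.

Lemma main1 (H : HilbertSpace) (A P : H -> H) (f y u0 : H) (h : R)
  (fdel : R -> H)
  (HA : bounded_linear A) (HP : bounded_linear P)
  (Hy : A y = f)
  (Hsa : selfadjoint (fun x => P (A x)))
  (Hpos : nonneg_op (fun x => P (A x)))
  (Hker : forall u, in_kernel (fun x => P (A x)) u <-> in_kernel A u)
  (Hh : 0 < h)
  (HhT : exists M, is_opnorm (fun x => P (A x)) M /\ h * M < 2)
  (Hu0 : orth_kernel A (hsub u0 y))
  (Hfdel : forall delta, 0 < delta -> hnorm (hsub (fdel delta) f) <= delta) :
  (forall n : R -> nat,
     (forall K, exists d0, 0 < d0 /\ forall delta, 0 < delta < d0 ->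
         K < INR (n delta) * h) ->
     (forall eps, 0 < eps -> exists d0, 0 < d0 /\ forall delta, 0 < delta < d0 ->
         INR (n delta) * h * delta < eps) ->
     forall eps, 0 < eps -> exists d0, 0 < d0 /\ forall delta, 0 < delta < d0 ->
         hnorm (hsub (iterate P A h (fdel delta) u0 (n delta)) y) < eps).
Proof.
  destruct HA as [HAa [HAs _]]. destruct HP as [HPa [HPs [C HC]]].
  assert (LA : linop A) by (split; auto). assert (LP : linop P) by (split; auto).
  set (T := fun x => P (A x)).
  assert (LT : linop T) by (split; intros; unfold T; rewrite ?HAa, ?HPa, ?HAs, ?HPs; auto).
  destruct HhT as [M [HMn HhM]].
  destruct (opnorm_bound T M LT HMn) as [HM HMb].
  assert (G : good T M h) by (repeat split; auto; apply LT).
  set (Cp := Rabs C).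
  assert (HCp : forall x, hnorm (P x) <= Cp * hnorm x).
  { intro x. eapply Rle_trans. apply HC. apply Rmult_le_compat_r. apply hnorm_nonneg. apply Rle_abs. }
  assert (HCp0 : 0 <= Cp) by apply Rabs_pos.
  set (w0 := hsub u0 y).
  assert (Hw0 : forall z, T z = hzero -> hinner w0 z = 0).
  { intros z Hz. apply Hu0. apply Hker. exact Hz. }
  assert (Herr : forall fd n, hnorm (hsub (hsub (iterate P A h fd u0 n) y) (Nat.iter n (Sop T h) w0))
                 <= INR n * (h * hnorm (P (hsub fd f)))).
  { intros fd n. induction n as [|n IH].
    - simpl. replace (hsub (hsub u0 y) w0) with (@hzero H) by (unfold w0; veq). rewrite hnorm_zero. lra.
    - set (u := iterate P A h fd u0 n) in *.
      set (v := Nat.iter n (Sop T h) w0) in *.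
      assert (E : hsub (hsub (iterate P A h fd u0 (S n)) y) (Nat.iter (S n) (Sop T h) w0) =
                  hadd (Sop T h (hsub (hsub u y) v)) (hscal h (P (hsub fd f)))).
      { simpl. fold u. fold v. unfold Sop, T.
        rewrite !(lin_sub A) by auto. rewrite !(lin_sub P) by auto. rewrite Hy.
        veq. }
      rewrite E. eapply Rle_trans. apply hnorm_tri. rewrite S_INR.
      rewrite hnorm_scal, Rabs_right by lra.
      pose proof (S_contr_n T M h G (hsub (hsub u y) v)). lra. }
  intros n Hn1 Hn2 eps Heps.
  destruct (noisefree T M h G w0 Hw0 (eps / 2) ltac:(lra)) as [N HN].
  destruct (Hn1 (INR N * h)) as [d1 [Hd1 Hd1']].
  destruct (Hn2 (eps / (2 * (Cp + 1)))) as [d2 [Hd2 Hd2']].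
  { apply Rdiv_lt_0_compat; lra. }
  exists (Rmin d1 d2). split. apply Rmin_pos; auto.
  intros delta [Hdp Hdl].
  assert (Hdl1 : delta < d1) by (eapply Rlt_le_trans; [exact Hdl| apply Rmin_l]).
  assert (Hdl2 : delta < d2) by (eapply Rlt_le_trans; [exact Hdl| apply Rmin_r]).
  specialize (Hd1' delta (conj Hdp Hdl1)). specialize (Hd2' delta (conj Hdp Hdl2)).
  assert (HnN : (N <= n delta)%nat).
  { apply INR_le. apply Rlt_le. apply Rmult_lt_reg_r with h; auto. }
  specialize (HN (n delta) HnN).
  specialize (Herr (fdel delta) (n delta)).
  set (u := iterate P A h (fdel delta) u0 (n delta)) in *.
  set (v := Nat.iter (n delta) (Sop T h) w0) in *.
  replace (hsub u y) with (hadd (hsub (hsub u y) v) v) by veq.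
  eapply Rle_lt_trans. apply hnorm_tri.
  assert (Hnoise : INR (n delta) * (h * hnorm (P (hsub (fdel delta) f))) <= eps / 2).
  { pose proof (HCp (hsub (fdel delta) f)). pose proof (Hfdel delta Hdp).
    pose proof (pos_INR (n delta)).
    assert (hnorm (P (hsub (fdel delta) f)) <= Cp * delta) by
      (eapply Rle_trans; [eauto| apply Rmult_le_compat_l; auto]).
    apply Rle_trans with (Cp * (INR (n delta) * h * delta)).
    - replace (Cp * (INR (n delta) * h * delta)) with (INR (n delta) * (h * (Cp * delta))) by ring.
      apply Rmult_le_compat_l; auto. apply Rmult_le_compat_l; lra.
    - apply Rle_trans with (Cp * (eps / (2 * (Cp + 1)))).
      apply Rmult_le_compat_l; lra.
      apply Rmult_le_reg_r with (2 * (Cp + 1)). lra.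
      replace (Cp * (eps / (2 * (Cp + 1))) * (2 * (Cp + 1))) with (Cp * eps) by (field; lra).
      replace (eps / 2 * (2 * (Cp + 1))) with (Cp * eps + eps) by field. lra. }
  lra.
Qed.

Lemma small_pow p c : 0 < p -> 0 < c -> exists d0, 0 < d0 /\ forall d, 0 < d < d0 -> Rpower d p < c.
Proof.
  intros Hp Hc. exists (exp (ln c / p)). split. apply exp_pos.
  intros d [Hd Hd0]. unfold Rpower. rewrite <- (exp_ln c) by auto. apply exp_increasing.
  apply ln_increasing in Hd0; auto. rewrite ln_exp in Hd0.
  apply Rmult_lt_compat_l with (r := p) in Hd0; auto.
  replace (p * (ln c / p)) with (ln c) in Hd0 by (field; lra). lra.
Qed.

Lemma Rabs_def2b x a : Rabs x <= a -> x <= a /\ - a <= x.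
Proof.
  intro Hx. destruct (Rcase_abs x) as [Hl|Hr].
  - rewrite Rabs_left in Hx by auto. lra.
  - rewrite Rabs_right in Hx by auto. lra.
Qed.

Lemma part2_conds (C gamma h : R) (n : R -> nat) : 0 < h -> 0 < C -> 0 < gamma < 1 ->
  (forall delta, 0 < delta -> Rabs (INR (n delta) - C / (h * Rpower delta gamma)) <= 1) ->
  (forall K, exists d0, 0 < d0 /\ forall delta, 0 < delta < d0 -> K < INR (n delta) * h) /\
  (forall eps, 0 < eps -> exists d0, 0 < d0 /\ forall delta, 0 < delta < d0 ->
         INR (n delta) * h * delta < eps).
Proof.
  intros Hh HC Hg Hn. split.
  - intro K. set (B := Rabs K + h + 1).
    assert (HB : 0 < B) by (unfold B; pose proof (Rabs_pos K); lra).
    destruct (small_pow gamma (C / B)) as [d0 [Hd0 Hd]]. lra. apply Rdiv_lt_0_compat; lra.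
    exists d0. split; auto. intros delta Hdel.
    specialize (Hd delta Hdel). specialize (Hn delta ltac:(lra)). apply Rabs_def2b in Hn.
    assert (Hp : 0 < Rpower delta gamma) by (unfold Rpower; apply exp_pos).
    assert (HCB : B < C / Rpower delta gamma).
    { apply Rmult_lt_reg_r with (Rpower delta gamma); auto.
      replace (C / Rpower delta gamma * Rpower delta gamma) with C by (field; lra).
      apply Rmult_lt_reg_l with (/B). apply Rinv_0_lt_compat; lra.
      replace (/ B * (B * Rpower delta gamma)) with (Rpower delta gamma) by (field; lra).
      unfold Rdiv in Hd. lra. }
    assert (E : C / (h * Rpower delta gamma) * h = C / Rpower delta gamma) by (field; lra).
    assert (INR (n delta) * h >= (C / (h * Rpower delta gamma) - 1) * h).
    { apply Rle_ge. apply Rmult_le_compat_r; lra. }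
    pose proof (Rle_abs K). unfold B in HCB. nra.
  - intros eps Heps.
    destruct (small_pow (1 - gamma) (eps / (2 * C))) as [d1 [Hd1 Hd1']]. lra. apply Rdiv_lt_0_compat; lra.
    exists (Rmin d1 (eps / (2 * h))). split. apply Rmin_pos; auto. apply Rdiv_lt_0_compat; lra.
    intros delta [Hdp Hdl].
    assert (Hdl1 : delta < d1) by (eapply Rlt_le_trans; [exact Hdl| apply Rmin_l]).
    assert (Hdl2 : delta < eps / (2 * h)) by (eapply Rlt_le_trans; [exact Hdl| apply Rmin_r]).
    specialize (Hd1' delta (conj Hdp Hdl1)). specialize (Hn delta Hdp). apply Rabs_def2b in Hn.
    assert (Hp : 0 < Rpower delta gamma) by (unfold Rpower; apply exp_pos).
    assert (Hpw : Rpower delta (1 - gamma) * Rpower delta gamma = delta).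
    { rewrite <- Rpower_plus. replace (1 - gamma + gamma) with 1 by ring. apply Rpower_1; auto. }
    assert (Hb : INR (n delta) * h * delta <= (C / (h * Rpower delta gamma) + 1) * h * delta).
    { apply Rmult_le_compat_r; [lra|]. apply Rmult_le_compat_r; lra. }
    assert (E : (C / (h * Rpower delta gamma) + 1) * h * delta = C * Rpower delta (1 - gamma) + h * delta).
    { set (q := Rpower delta (1 - gamma)) in *. set (p := Rpower delta gamma) in *. rewrite <- Hpw. field; lra. }
    rewrite E in Hb.
    assert (C * Rpower delta (1 - gamma) < eps / 2).
    { apply Rmult_lt_reg_l with (/C). apply Rinv_0_lt_compat; lra.
      replace (/ C * (C * Rpower delta (1 - gamma))) with (Rpower delta (1 - gamma)) by (field; lra).
      replace (/ C * (eps / 2)) with (eps / (2 * C)) by (field; lra). exact Hd1'. }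
    assert (h * delta < eps / 2).
    { apply Rmult_lt_reg_l with (/h). apply Rinv_0_lt_compat; lra.
      replace (/ h * (h * delta)) with delta by (field; lra).
      replace (/ h * (eps / 2)) with (eps / (2 * h)) by (field; lra). exact Hdl2. }
    lra.
Qed.
Theorem theorem4 (H : HilbertSpace) (A P : H -> H) (f y u0 : H) (h : R)
  (fdel : R -> H)
  (HA : bounded_linear A) (HP : bounded_linear P)
  (Hsolv : exists u, A u = f)
  (Hy : A y = f) (Hyorth : orth_kernel A y)
  (Hsa : selfadjoint (fun x => P (A x)))
  (Hpos : nonneg_op (fun x => P (A x)))
  (Hker : forall u, in_kernel (fun x => P (A x)) u <-> in_kernel A u)
  (Hh : 0 < h)
  (HhT : exists M, is_opnorm (fun x => P (A x)) M /\ h * M < 2)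
  (Hu0 : orth_kernel A (hsub u0 y))
  (Hfdel : forall delta, 0 < delta -> hnorm (hsub (fdel delta) f) <= delta) :
  (forall n : R -> nat,
     (forall delta, 0 < delta -> (1 <= n delta)%nat) ->
     (forall K, exists d0, 0 < d0 /\ forall delta, 0 < delta < d0 ->
         K < INR (n delta) * h) ->
     (forall eps, 0 < eps -> exists d0, 0 < d0 /\ forall delta, 0 < delta < d0 ->
         INR (n delta) * h * delta < eps) ->
     forall eps, 0 < eps -> exists d0, 0 < d0 /\ forall delta, 0 < delta < d0 ->
         hnorm (hsub (iterate P A h (fdel delta) u0 (n delta)) y) < eps)
  /\
  (forall (C gamma : R) (n : R -> nat), 0 < C -> 0 < gamma < 1 ->
     (forall delta, 0 < delta ->
         Rabs (INR (n delta) - C / (h * Rpower delta gamma)) <= 1) ->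
     forall eps, 0 < eps -> exists d0, 0 < d0 /\ forall delta, 0 < delta < d0 ->
         hnorm (hsub (iterate P A h (fdel delta) u0 (n delta)) y) < eps).
Proof.
  split.
  - intros n _ Hn1 Hn2. eapply main1; eauto.
  - intros C gamma n HC Hg Hn.
    destruct (part2_conds C gamma h n Hh HC Hg Hn) as [Hn1 Hn2].
    eapply main1; eauto.
Qed.
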